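(* Let $\dot\Theta_\theta$ be a subset of a Hilbert space with inner product $\langle\cdot,\cdot\rangle_\theta$, let $H$ be a Hilbert space, let $A_\theta:\operatorname{lin}\dot\Theta_\theta\to H$ be a continuous linear operator and suppose its adjoint $A_\theta^\star:H\to\overline{\operatorname{lin}}\,\dot\Theta_\theta$ is injective. Let $\mathcal G$ be a dense subspace of $H$. Then $\tilde\chi_\theta\in\overline{\operatorname{lin}}\,\dot\Theta_\theta$ lies in $\operatorname{ran}A_\theta^\star$ if and only if (i) there is a sequence $\chi_n\in A_\theta^\star(\mathcal G)$ with $\chi_n\to\tilde\chi_\theta$ as $n\to\infty$, and (ii) $(A_\theta^\star)^{-1}\chi_n$ converges in $H$ to some $\psi\in H$. In this case $A_\theta^\star\psi=\tilde\chi_\theta$, and $\Pi_{\overline{\operatorname{ran}}A_\theta}\psi=\psi=(A_\theta^\star)^\dagger\tilde\chi_\theta$, i.e. $\psi$ is the efficient influence function.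
   Context: $\Pi_{\overline{\operatorname{ran}}A_\theta}$ denotes the orthogonal projection onto the closure of the range of $A_\theta$. $(A_\theta^\star)^\dagger$ is the Moore–Penrose pseudoinverse: for $\zeta\in\operatorname{ran}A_\theta^\star$, $(A_\theta^\star)^\dagger\zeta$ is the unique element of $(\ker A_\theta^\star)^\perp$ mapped to $\zeta$. In the semiparametric setting where $A_\theta$ is the generalized score operator of a model at $\theta$ and $\tilde\chi_\theta$ is the gradient of a pathwise differentiable parameter, the efficient influence function is $(A_\theta^\star)^\dagger\tilde\chi_\theta$. *)

(* Defs.v *)
(* Real Hilbert spaces are modelled as complete normed
   modules over R : realType equipped with an inner product inducing the norm. *)
From HB Require Import structures.
From mathcomp Require Import all_boot all_order all_algebra.
From mathcomp Require Import all_classical all_reals all_analysis.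
Set Implicit Arguments. Unset Strict Implicit. Unset Printing Implicit Defensive.
Import Order.TTheory GRing.Theory Num.Theory.
Import numFieldNormedType.Exports.
Local Open Scope classical_set_scope.
Local Open Scope ring_scope.

Section Defs.
Context {R : realType}.

Definition inner_product (V : normedModType R) (ip : V -> V -> R) : Prop :=
  [/\ (forall x y, ip x y = ip y x),
      (forall (a : R) x y z, ip (a *: x + y) z = a * ip x z + ip y z) &
      (forall x, `|x| = Num.sqrt (ip x x))].

Definition lin (V : normedModType R) (S : set V) : set V :=
  [set x | exists n (a : 'I_n -> R) (v : 'I_n -> V),
     (forall i, S (v i)) /\ x = \sum_(i < n) a i *: v i].

Definition lin_subspace (V : normedModType R) (M : set V) : Prop :=
  M 0 /\ forall (a : R) x y, M x -> M y -> M (a *: x + y).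

Definition linear_on (V W : normedModType R) (D : set V) (f : V -> W) : Prop :=
  forall (a : R) x y, D x -> D y -> f (a *: x + y) = a *: f x + f y.

Definition is_adjoint (V W : normedModType R) (ipV : V -> V -> R)
    (ipW : W -> W -> R) (S : set V) (A : V -> W) (Ast : W -> V) : Prop :=
  (forall h, closure (lin S) (Ast h)) /\
  (forall h x, lin S x -> ipV (Ast h) x = ipW h (A x)).

(* inverse of an injective map f on its range (arbitrary outside the range) *)
Definition inv_fun (W : normedModType R) (V : Type) (f : W -> V) (y : V) : W :=
  get [set h | f h = y].

Definition orth_proj (W : normedModType R) (ip : W -> W -> R) (M : set W)
    (x : W) : W :=
  get [set p | M p /\ forall m, M m -> ip (x - p) m = 0].

Definition pseudoinv (W V : normedModType R) (ip : W -> W -> R) (f : W -> V)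
    (z : V) : W :=
  get [set h | (forall k, f k = 0 -> ip h k = 0) /\ f h = z].

End Defs.

(* Main.v *)
Require Import Defs.
From HB Require Import structures.
From mathcomp Require Import all_boot all_order all_algebra.
From mathcomp Require Import all_classical all_reals all_analysis.
From mathcomp Require Import ring lra.
Import Order.TTheory GRing.Theory Num.Theory.
Import numFieldNormedType.Exports.
Local Open Scope classical_set_scope.
Local Open Scope ring_scope.

Section IP.
Context {R : realType} {V : normedModType R} (ip : V -> V -> R).
Hypothesis Hip : inner_product ip.

Lemma ipC x y : ip x y = ip y x.
Proof. by case: Hip. Qed.
Lemma ipL a x y z : ip (a *: x + y) z = a * ip x z + ip y z.
Proof. by case: Hip. Qed.
Lemma ip0l z : ip 0 z = 0.
Proof.
have h := ipL 1 0 0 z; rewrite scaler0 addr0 mul1r in h; lra.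
Qed.
Lemma ipDl x y z : ip (x + y) z = ip x z + ip y z.
Proof. by rewrite -[x in LHS]scale1r ipL mul1r. Qed.
Lemma ipZl a x z : ip (a *: x) z = a * ip x z.
Proof. by rewrite -[a *: x]addr0 ipL ip0l addr0. Qed.
Lemma ipNl x z : ip (- x) z = - ip x z.
Proof. by rewrite -scaleN1r ipZl mulN1r. Qed.
Lemma ipBl x y z : ip (x - y) z = ip x z - ip y z.
Proof. by rewrite ipDl ipNl. Qed.
Lemma ip0r z : ip z 0 = 0.
Proof. by rewrite ipC ip0l. Qed.
Lemma ipDr x y z : ip z (x + y) = ip z x + ip z y.
Proof. by rewrite ipC ipDl !(ipC z). Qed.
Lemma ipZr a x z : ip z (a *: x) = a * ip z x.
Proof. by rewrite ipC ipZl ipC. Qed.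
Lemma ipNr x z : ip z (- x) = - ip z x.
Proof. by rewrite ipC ipNl ipC. Qed.
Lemma ipBr x y z : ip z (x - y) = ip z x - ip z y.
Proof. by rewrite ipDr ipNr. Qed.
Lemma ipxx x : ip x x = `|x| ^+ 2.
Proof.
case: Hip => _ _ /(_ x) ->.
have [h|h] := leP 0 (ip x x); first by rewrite sqr_sqrtr.
have : `|x| = 0 by case: Hip => _ _ ->; rewrite ltr0_sqrtr.
by move/normr0_eq0 => x0; move: h; rewrite x0 ip0l ltxx.
Qed.
Lemma ip_le x y : ip x y <= `|x| * `|y|.
Proof.
have e1 : ip (x + y) (x + y) = ip x x + 2 * ip x y + ip y y.
  by rewrite ipDl !ipDr (ipC y x); ring.
have e2 : ip (x - y) (x - y) = ip x x - 2 * ip x y + ip y y.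
  by rewrite ipBl !ipBr (ipC y x); ring.
move: e1 e2; rewrite !ipxx => e1 e2.
have t1 := ler_normD x y.
have t2 := lerB_dist x y.
have t3 := lerB_dist y x.
rewrite distrC in t3.
have n1 : 0 <= `|x + y| by [].
have n2 : 0 <= `|x - y| by [].
have n3 : 0 <= `|x| by [].
have n4 : 0 <= `|y| by [].
nra.
Qed.
Lemma ip_abs x y : `|ip x y| <= `|x| * `|y|.
Proof.
rewrite ler_norml ip_le andbT.
have := ip_le x (- y); rewrite ipNr normrN; lra.
Qed.
End IP.

Section Lin.
Context {R : realType} {V : normedModType R} (S : set V).

Lemma lin0 : lin S 0.
Proof.
exists 0%N, (fun _ => 0), (fun _ => 0); split; first by case.
by rewrite big_ord0.
Qed.

Lemma linL a x y : lin S x -> lin S y -> lin S (a *: x + y).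
Proof.
move=> [n [c [v [Sv ->]]]] [m [d [w [Sw ->]]]].
exists (n + m)%N, (fun i => match @fintype.split n m i with inl j => a * c j | inr k => d k end),
  (fun i => match @fintype.split n m i with inl j => v j | inr k => w k end); split.
  by move=> i; case: (@fintype.split n m i).
rewrite big_split_ord /= scaler_sumr; congr (_ + _); apply: eq_bigr => i _.
  by rewrite (unsplitK (inl i)) scalerA.
by rewrite (unsplitK (inr i)).
Qed.

Lemma linZ a x : lin S x -> lin S (a *: x).
Proof. by move=> h; rewrite -[a *: x]addr0; apply: linL => //; apply: lin0. Qed.
Lemma linD x y : lin S x -> lin S y -> lin S (x + y).
Proof. by move=> h1 h2; rewrite -[x]scale1r; apply: linL. Qed.
Lemma linB x y : lin S x -> lin S y -> lin S (x - y).
Proof. by move=> h1 h2; apply: linD => //; rewrite -scaleN1r; apply: linZ. Qed.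

Lemma closure_normP u : closure S u <-> forall e, 0 < e -> exists x, S x /\ `|u - x| < e.
Proof.
split.
  move=> cl e e0; have [x [Sx bx]] := cl _ (nbhsx_ballx u _ e0).
  by exists x; split => //; move: bx; rewrite -ball_normE.
move=> H B /nbhs_ballP [e e0 sub]; have [x [Sx ux]] := H e e0.
by exists x; split => //; apply: sub; rewrite -ball_normE.
Qed.

Context {W : normedModType R} (A : V -> W).
Hypothesis Alin : linear_on (lin S) A.

Lemma A0 : A 0 = 0.
Proof.
have h := Alin 1 0 0 lin0 lin0; rewrite scaler0 addr0 scale1r in h.
by move: (congr1 (fun z => z - A 0) h); rewrite /= subrr addrK.
Qed.
End Lin.

Section AB.
Context {R : realType} {V : normedModType R} (S : set V).
Context {W : normedModType R} (A : V -> W).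
Hypothesis Alin : linear_on (lin S) A.
Hypothesis Acont : {within lin S, continuous A}.

Lemma AZ a x : lin S x -> A (a *: x) = a *: A x.
Proof. by move=> h; have := Alin a x 0 h (lin0 S); rewrite !addr0 (A0 S A Alin) addr0. Qed.
Lemma AB x y : lin S x -> lin S y -> A (x - y) = A x - A y.
Proof.
move=> hx hy; have := Alin (-1) y x hy hx.
by rewrite !scaleN1r addrC => ->; rewrite addrC.
Qed.

Lemma A_bound : exists2 C, 0 < C & forall x, lin S x -> `|A x| <= C * `|x|.
Proof.
have /subspace_continuousP := Acont.
move=> /(_ 0 (lin0 S)) /cvgrPdist_lt /(_ 1 ltr01).
rewrite /within => /nbhs_ballP [d d0 hd].
exists (2 / d); first by rewrite divr_gt0.
move=> x lx; have [->|xn0] := eqVneq x 0.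
  by rewrite (A0 S A Alin) !normr0 mulr0.
have nx : 0 < `|x| by rewrite normr_gt0.
have t0 : 0 < d / (2 * `|x|) by rewrite divr_gt0 // mulr_gt0.
have hy : ball 0 d (d / (2 * `|x|) *: x).
  rewrite -ball_normE /= sub0r normrN normrZ gtr0_norm //.
  have -> : d / (2 * `|x|) * `|x| = d / 2 by field; rewrite gt_eqF.
  have : 0 < d by []. lra.
move: (hd _ hy (linZ S _ _ lx)).
rewrite /from_subspace (A0 S A Alin) sub0r normrN AZ // normrZ gtr0_norm // => h.
have : d * `|A x| < 2 * `|x|.
  by move: h; rewrite mulrAC ltr_pdivrMr ?mul1r // mulr_gt0.
move=> h2; rewrite mulrAC ler_pdivlMr //; rewrite mulrC; lra.
Qed.
End AB.

Section Adj.
Context {R : realType} {V W : normedModType R} (ipV : V -> V -> R) (ipW : W -> W -> R).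
Context (Theta : set V) (A : V -> W) (Ast : W -> V).
Hypothesis HV : inner_product ipV.
Hypothesis HW : inner_product ipW.
Hypothesis Alin : linear_on (lin Theta) A.
Hypothesis Acont : {within lin Theta, continuous A}.
Hypothesis Hadj : is_adjoint ipV ipW Theta A Ast.

Lemma Z2 u v : closure (lin Theta) u -> closure (lin Theta) v ->
  (forall x, lin Theta x -> ipV u x = ipV v x) -> u = v.
Proof.
move=> cu cv huv; apply/eqP; rewrite -subr_eq0 -normr_eq0; apply/eqP.
set n := `|u - v|.
have [//|np] := eqVneq n 0; exfalso.
have n0 : 0 < n by rewrite lt_def np normr_ge0.
have e0 : 0 < n / 4 by rewrite divr_gt0.
have [x [lx ux]] := (closure_normP _ u).1 cu _ e0.
have [y [ly vy]] := (closure_normP _ v).1 cv _ e0.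
have E : n ^+ 2 = ipV (u - v) (u - x) - ipV (u - v) (v - y).
  rewrite -(ipxx ipV HV) !(ipBr ipV HV) (ipBl ipV HV (u) v x) (ipBl ipV HV u v y) huv // (huv y ly).
  ring.
have b1 := ip_le ipV HV (u - v) (u - x).
have b2 := ip_abs ipV HV (u - v) (v - y).
rewrite -/n in b1 b2.
have b3 : - ipV (u - v) (v - y) <= `|ipV (u - v) (v - y)|.
  by rewrite -[X in _ <= X]normrN ler_norm.
have h1 : n * `|u - x| <= n * (n / 4) by rewrite ler_pM2l // ltW.
have h2 : n * `|v - y| <= n * (n / 4) by rewrite ler_pM2l // ltW.
have nn : 0 < n * n by rewrite mulr_gt0.
rewrite expr2 in E.
lra.
Qed.

Lemma Ast_lip : exists2 C, 0 < C & forall h k, `|Ast h - Ast k| <= C * `|h - k|.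
Proof.
have [C C0 hC] := A_bound Theta A Alin Acont.
exists C => // h k.
case: Hadj => cl adj.
set n := `|Ast h - Ast k|; set m := `|h - k|.
suff : n ^+ 2 <= C * m * n.
  have [n0e|nn0] := eqVneq n 0.
    by move=> _; rewrite n0e; apply: mulr_ge0 (ltW C0) (normr_ge0 _).
  have n0 : 0 < n by rewrite lt_def nn0 normr_ge0.
  by rewrite expr2 ler_pM2r.
apply/ler_addgt0Pr => e' e'0.
set K := 2 * n + 2 * (C * m) + 1.
have n0' : 0 <= n by exact: normr_ge0.
have m0' : 0 <= m by exact: normr_ge0.
have Cm : 0 <= C * m by apply: mulr_ge0 (ltW C0) _.
have K0 : 0 < K by rewrite /K; lra.
set e := e' / K.
have e0 : 0 < e by rewrite divr_gt0.
have eK : e * K = e' by rewrite /e mulrAC -mulrA divff ?gt_eqF // mulr1.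
have [x [lx ux]] := (closure_normP _ _).1 (cl h) _ e0.
have [y [ly vy]] := (closure_normP _ _).1 (cl k) _ e0.
set u := Ast h; set v := Ast k.
have E : n ^+ 2 = ipV (u - v) (u - x) - ipV (u - v) (v - y) + ipW (h - k) (A (x - y)).
  rewrite -(ipxx ipV HV) !(ipBr ipV HV) !(ipBl ipV HV) (adj h x lx) (adj k x lx) (adj h y ly) (adj k y ly).
  rewrite (AB Theta A Alin) // !(ipBr ipW HW) !(ipBl ipW HW).
  ring.
have b1 := ip_le ipV HV (u - v) (u - x).
have b2 := ip_abs ipV HV (u - v) (v - y).
have b3 := ip_le ipW HW (h - k) (A (x - y)).
rewrite -/n -/m in b1 b2 b3.
have b4 : - ipV (u - v) (v - y) <= `|ipV (u - v) (v - y)|.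
  by rewrite -[X in _ <= X]normrN ler_norm.
have b5 : `|A (x - y)| <= C * (e + n + e).
  apply: (le_trans (hC _ (linB _ _ _ lx ly))); rewrite ler_pM2l //.
  have -> : x - y = - (u - x) + (u - v) + (v - y) by rewrite opprB !addrA !subrK.
  apply: le_trans (ler_normD _ _) _; apply: lerD; last exact: ltW.
  apply: le_trans (ler_normD _ _) _; apply: lerD; last exact: lexx.
  by rewrite normrN; apply: ltW.
have m0 : 0 <= m by exact: normr_ge0.
have n0 : 0 <= n by exact: normr_ge0.
have h1 : n * `|u - x| <= n * e by rewrite ler_wpM2l // ltW.
have h2 : n * `|v - y| <= n * e by rewrite ler_wpM2l // ltW.
have h3 : m * `|A (x - y)| <= m * (C * (e + n + e)) by rewrite ler_wpM2l.
rewrite /K in eK.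
nra.
Qed.
End Adj.

Lemma natinv_small {R : realType} (r : R) : 0 < r ->
  exists N, forall n, (N <= n)%N -> n.+1%:R^-1 < r.
Proof.
move=> r0; exists (Num.truncn r^-1) => n hn.
have h1 := truncnS_gt r^-1.
have h2 : (Num.truncn r^-1).+1%:R <= n.+1%:R :> R by rewrite ler_nat ltnS.
rewrite -[r]invrK ltf_pV2 ?posrE ?invr_gt0 ?ltr0Sn //.
exact: lt_le_trans h1 h2.
Qed.

Lemma near_oo {R : realType} (V : normedModType R) (a : nat -> V) (p : V) :
  a @ \oo --> p -> forall e, 0 < e -> exists N, forall n, (N <= n)%N -> `|p - a n| < e.
Proof.
move=> /cvgrPdist_lt h e e0; have [N _ hN] := h e e0.
by exists N => n hn; apply: hN.
Qed.

Lemma eventually_of {T : Type} (P : nat -> Prop) N :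
  (forall n, (N <= n)%N -> P n) -> \forall n \near \oo, P n.
Proof. by move=> h; exists N. Qed.

Section Par.
Context {R : realType} {V : normedModType R} (ip : V -> V -> R).
Hypothesis Hip : inner_product ip.
Lemma parallelogram (x y : V) : `|x + y| ^+ 2 + `|x - y| ^+ 2 = 2 * `|x| ^+ 2 + 2 * `|y| ^+ 2.
Proof.
rewrite -!(ipxx ip Hip) !(ipBl ip Hip) !(ipDl ip Hip) !(ipBr ip Hip) !(ipDr ip Hip) (ipC ip Hip y x).
ring.
Qed.
Lemma norm_sub_scale (u m : V) (t : R) : `|u - t *: m| ^+ 2 = `|u| ^+ 2 - 2 * t * ip u m + t ^+ 2 * `|m| ^+ 2.
Proof.
rewrite -!(ipxx ip Hip) !(ipBl ip Hip) !(ipBr ip Hip) !(ipZl ip Hip) !(ipZr ip Hip) (ipC ip Hip m u).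
ring.
Qed.
End Par.

Section Dense.
Context {R : realType} {V : normedModType R} {W : completeNormedModType R}
  (ipV : V -> V -> R) (ipW : W -> W -> R).
Context (Theta : set V) (A : V -> W) (Ast : W -> V).
Hypothesis HV : inner_product ipV.
Hypothesis HW : inner_product ipW.
Hypothesis Alin : linear_on (lin Theta) A.
Hypothesis Acont : {within lin Theta, continuous A}.
Hypothesis Hadj : is_adjoint ipV ipW Theta A Ast.
Hypothesis Ainj : forall h1 h2, Ast h1 = Ast h2 -> h1 = h2.

Lemma Ast0 : Ast 0 = 0.
Proof.
case: Hadj => cl adj.
apply: (Z2 ipV Theta HV) (cl 0) _ _; first exact: subset_closure (lin0 Theta).
by move=> x lx; rewrite adj // (ip0l ipW HW) (ip0l ipV HV).
Qed.

Lemma dense_ranA w : closure (A @` lin Theta) w.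
Proof.
case: Hadj => cl adj.
set Sd := [set r | exists x, lin Theta x /\ r = `|w - A x|].
have Sd_ne : Sd !=set0 by exists `|w - A 0|, 0; split => //; apply: lin0.
have Sd_lb : has_lbound Sd by exists 0 => r [x [_ ->]].
have Sd_inf : has_inf Sd by [].
set d := inf Sd.
have dlb x : lin Theta x -> d <= `|w - A x|.
  by move=> lx; apply: (ge_inf Sd_lb); exists x.
have d0 : 0 <= d by apply: lb_le_inf => // r [x [_ ->]].
have ex : forall n : nat, exists x, lin Theta x /\ `|w - A x| < d + n.+1%:R^-1.
  move=> n; have hn : 0 < n.+1%:R^-1 :> R by rewrite invr_gt0 ltr0Sn.
  have [r [x [lx ->]] hr] := @inf_adherent _ Sd _ hn Sd_inf.
  by exists x.
have [xs hxs] := choice ex.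
set a := fun n => A (xs n).
have AD x y : lin Theta x -> lin Theta y -> A (x + y) = A x + A y.
  by move=> lx ly; have := Alin 1 x y lx ly; rewrite !scale1r.
have cau : cauchy_ex (a @ \oo).
  move=> e e0.
  set r := e ^+ 2 / (8 * d + 5 + e ^+ 2).
  have den0 : 0 < 8 * d + 5 + e ^+ 2 by have := sqr_ge0 e; lra.
  have r0 : 0 < r by rewrite divr_gt0 // exprn_gt0.
  have [N hN] := natinv_small r r0.
  exists (a N); exists N => // m /= hm.
  rewrite -ball_normE /=.
  set q := N.+1%:R^-1 : R.
  have q0 : 0 < q by rewrite invr_gt0 ltr0Sn.
  have qr : q < r := hN N (leqnn N).
  have qm : m.+1%:R^-1 <= q by rewrite lef_pV2 ?posrE ?ltr0Sn // ler_nat ltnS.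
  have [lxN hxN] := hxs N.
  have [lxm hxm] := hxs m.
  have lz : lin Theta (2^-1 *: (xs N + xs m)) by apply: linZ; apply: linD.
  have hz := dlb _ lz.
  rewrite (AZ Theta A Alin _ _ (linD _ _ _ lxN lxm)) (AD _ _ lxN lxm) in hz.
  have P := parallelogram ipW HW (w - a N) (w - a m).
  have E1 : w - a N + (w - a m) = 2 *: (w - 2^-1 *: (a N + a m)).
    by rewrite scalerBr scalerA divff ?pnatr_eq0 // scale1r scaler_nat mulr2n; rewrite opprD !addrA; congr (_ - _); rewrite -!addrA; congr (_ + _); rewrite addrC.
  have E2 : w - a N - (w - a m) = a m - a N by rewrite opprB addrC addrA subrK.
  rewrite E1 E2 normrZ ger0_norm // in P.
  have ha : `|a m - a N| = `|a N - a m| by rewrite distrC.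
  rewrite ha in P.
  set t := `|a N - a m| in P *.
  set z := `|w - 2^-1 *: (a N + a m)| in P hz.
  set s1 := `|w - a N| in P hxN.
  set s2 := `|w - a m| in P hxm.
  have t0 : 0 <= t by exact: normr_ge0.
  have s10 : 0 <= s1 by exact: normr_ge0.
  have s20 : 0 <= s2 by exact: normr_ge0.
  have hs1 : s1 < d + q by [].
  have hs2 : s2 < d + q by apply: lt_le_trans hxm _; rewrite lerD2l.
  have hq1 : q < 1.
    apply: lt_le_trans qr _; rewrite ler_pdivrMr // mul1r; have := sqr_ge0 e; lra.
  have hrq : q * (8 * d + 5 + e ^+ 2) < e ^+ 2.
    by move: qr; rewrite ltr_pdivlMr.
  have : t ^+ 2 < e ^+ 2 by nra.
  by rewrite ltr_pXn2r // ?nnegrE ltW.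
have cvga : cvg (a @ \oo) by apply/cauchy_cvgP; apply: cauchy_exP.
set p := lim (a @ \oo) in cvga.
have pcl : closure (A @` lin Theta) p.
  apply: (@closed_cvg _ _ _ _ a _ (@closed_closure _ _)) cvga.
  exists 0%N => // n _ /=; apply: subset_closure; exists (xs n) => //.
  by case: (hxs n).
have nearp := (@near_oo _ _ a p cvga).

have up : `|w - p| <= d.
  apply/ler_addgt0Pr => e e0.
  have e2 : 0 < e / 2 by rewrite divr_gt0.
  have [N1 h1] := nearp _ e2.
  have [N2 h2] := natinv_small _ e2.
  have := h1 (maxn N1 N2) (leq_maxl _ _).
  have := h2 (maxn N1 N2) (leq_maxr _ _).
  have [_ hx] := hxs (maxn N1 N2).
  have tr := ler_distD (a (maxn N1 N2)) w p.
  rewrite (distrC (a _) p) in tr.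
  rewrite /a /= in tr *.
  move=> ha hb; move: ha hb hx tr.
  set q := (maxn N1 N2).+1%:R^-1; set r1 := `|w - _|; set r2 := `|p - _|; set r3 := `|w - p|.
  move=> ha hb hx tr; lra.
have low x t : lin Theta x -> d <= `|w - p - t *: A x|.
  move=> lx; apply/ler_addgt0Pr => e e0.
  have [N hN] := nearp _ e0.
  have [lxN _] := hxs N.
  have lz : lin Theta (xs N + t *: x) by apply: linD => //; apply: linZ.
  have := dlb _ lz.
  rewrite (AD _ _ lxN (linZ _ _ _ lx)) (AZ Theta A Alin _ _ lx).
  have -> : w - (A (xs N) + t *: A x) = (w - p - t *: A x) + (p - A (xs N)).
    by rewrite addrACA subrK opprD [- A (xs N) + _]addrC.
  move=> h; apply: le_trans h _; apply: le_trans (ler_normD _ _) _.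
  by rewrite lerD2l ltW //; apply: hN.
have orth x : lin Theta x -> ipW (w - p) (A x) = 0.
  move=> lx.
  set u := w - p; set m := A x; set c := ipW u m; set b := `|m| ^+ 2.
  have b0 : 0 <= b by rewrite /b sqr_ge0.
  set t := c / (b + 1).
  have ct : c = t * (b + 1) by rewrite /t divfK // gt_eqF // ltr_pwDr.
  have hl := low x t lx.
  have h := norm_sub_scale ipW HW u m t.
  rewrite -/u -/m -/c -/b in h hl.
  have u0 : 0 <= `|u| by exact: normr_ge0.
  have : `|u| ^+ 2 <= `|u - t *: m| ^+ 2 by nra.
  rewrite h => h2.
  have tt : t ^+ 2 <= 0 by nra.
  have : t ^+ 2 = 0 by apply/eqP; rewrite eq_le tt sqr_ge0.
  by move/eqP; rewrite sqrf_eq0 => /eqP t0; rewrite ct t0 mul0r.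
have hA : Ast (w - p) = 0.
  apply: (Z2 ipV Theta HV) (cl _) _ _; first exact: subset_closure (lin0 Theta).
  by move=> x lx; rewrite adj // orth // (ip0l ipV HV).
rewrite -Ast0 in hA; have := Ainj _ _ hA.
by move/eqP; rewrite subr_eq0 => /eqP ->.
Qed.
End Dense.

Lemma cvg_from_N {R : realType} (V : normedModType R) (f : nat -> V) (l : V) :
  (forall e, 0 < e -> exists N, forall n, (N <= n)%N -> `|l - f n| < e) ->
  f @ \oo --> l.
Proof.
move=> h; apply/cvgrPdist_lt => e e0; have [N hN] := h e e0.
by exists N => // n /= hn; apply: hN.
Qed.

Theorem proposition2p11 (R : realType)
  (V : completeNormedModType R) (ipV : V -> V -> R)
  (W : completeNormedModType R) (ipW : W -> W -> R)
  (Theta : set V) (A : V -> W) (Ast : W -> V) (G : set W) (chi : V) :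
  inner_product ipV -> inner_product ipW ->
  linear_on (lin Theta) A ->
  {within lin Theta, continuous A} ->
  is_adjoint ipV ipW Theta A Ast ->
  (forall h1 h2, Ast h1 = Ast h2 -> h1 = h2) ->
  lin_subspace G -> dense G ->
  closure (lin Theta) chi ->
  ((exists h, Ast h = chi) <->
   (exists (chin : nat -> V) (psi : W),
      (forall n, (Ast @` G) (chin n)) /\
      chin @ \oo --> chi /\
      (fun n => inv_fun Ast (chin n)) @ \oo --> psi)) /\
  (forall (chin : nat -> V) (psi : W),
      (forall n, (Ast @` G) (chin n)) ->
      chin @ \oo --> chi ->
      (fun n => inv_fun Ast (chin n)) @ \oo --> psi ->
      [/\ Ast psi = chi,
          orth_proj ipW (closure (A @` lin Theta)) psi = psi &
          psi = pseudoinv ipW Ast chi]).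
Proof.
move=> HV HW Alin Acont Hadj Ainj HG Gd cchi.
have [C C0 Lip] := Ast_lip ipV ipW Theta A Ast HV HW Alin Acont Hadj.
have A0 := Ast0 ipV ipW Theta A Ast HV HW Hadj.
have dns := dense_ranA ipV ipW Theta A Ast HV HW Alin Hadj Ainj.
have invE h : inv_fun Ast (Ast h) = h.
  apply: Ainj; rewrite /inv_fun.
  by have := @getPex _ [set k | Ast k = Ast h] (ex_intro _ h erefl).
have part2 : forall (chin : nat -> V) (psi : W),
      (forall n, (Ast @` G) (chin n)) ->
      chin @ \oo --> chi ->
      (fun n => inv_fun Ast (chin n)) @ \oo --> psi ->
      [/\ Ast psi = chi,
          orth_proj ipW (closure (A @` lin Theta)) psi = psi &
          psi = pseudoinv ipW Ast chi].
  move=> chin psi hG hc hpsi.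
  have gE n : Ast (inv_fun Ast (chin n)) = chin n.
    by have [g _ <-] := hG n; rewrite invE.
  have Apsi : Ast psi = chi.
    apply/eqP; rewrite -subr_eq0 -normr_le0; apply/ler_addgt0Pr => e e0.
    rewrite add0r.
    have e2 : 0 < e / 2 by rewrite divr_gt0.
    have e2C : 0 < e / 2 / C by rewrite divr_gt0.
    have [N1 h1] := near_oo _ _ _ hpsi _ e2C.
    have [N2 h2] := near_oo _ _ _ hc _ e2.
    set n := maxn N1 N2.
    have := h1 n (leq_maxl _ _); have := h2 n (leq_maxr _ _).
    have tr := ler_distD (chin n) (Ast psi) chi.
    have l := Lip psi (inv_fun Ast (chin n)).
    rewrite gE in l.
    rewrite (distrC (chin n) chi) in tr.
    move=> ha hb.
    have hb' : C * `|psi - inv_fun Ast (chin n)| <= C * (e / 2 / C).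
      by rewrite ler_pM2l // ltW.
    have eq2 : C * (e / 2 / C) = e / 2 by field; rewrite gt_eqF.
    rewrite eq2 in hb'.
    lra.
  split => //.
  - rewrite /orth_proj.
    set M := closure _.
    set P := [set p | M p /\ forall m, M m -> ipW (psi - p) m = 0].
    have : P (get P).
      apply: getPex; exists psi; split; first exact: dns.
      by move=> m _; rewrite subrr (ip0l ipW HW).
    move=> [_ hq]; have := hq (psi - get P) (dns _).
    rewrite (ipxx ipW HW) => /eqP; rewrite sqrf_eq0 normr_eq0 subr_eq0 => /eqP.
    by move=> <-.
  - rewrite /pseudoinv.
    set P := [set h | (forall k, Ast k = 0 -> ipW h k = 0) /\ Ast h = chi].
    have : P (get P).
      apply: getPex; exists psi; split => // k hk.
      by rewrite -A0 in hk; rewrite (Ainj _ _ hk) (ip0r ipW HW).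
    by move=> [_ hq]; apply: Ainj; rewrite hq.
split; last exact: part2.
split.
- move=> [h hh].
  have ex : forall n : nat, exists g, G g /\ `|h - g| < n.+1%:R^-1.
    move=> n; have hn : 0 < n.+1%:R^-1 :> R by rewrite invr_gt0 ltr0Sn.
    have [g [bg Gg]] := Gd (ball h n.+1%:R^-1) (ex_intro _ h (ballxx _ hn)) (ball_open _ _).
    by exists g; split => //; move: bg; rewrite -ball_normE.
  have [gs hgs] := choice ex.
  have gcv : gs @ \oo --> h.
    apply: cvg_from_N => e e0; have [N hN] := natinv_small e e0.
    exists N => n hn; have [_ hh'] := hgs n.
    exact: lt_trans hh' (hN n hn).
  exists (fun n => Ast (gs n)), h; split; first by move=> n; exists (gs n) => //; case: (hgs n).
  split.
    apply: cvg_from_N => e e0.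
    have eC : 0 < e / C by rewrite divr_gt0.
    have [N hN] := near_oo _ _ _ gcv _ eC.
    exists N => n hn; rewrite -hh.
    apply: le_lt_trans (Lip _ _) _.
    have := hN n hn; rewrite ltr_pdivlMr // => hh2.
    by rewrite mulrC.
  by under eq_fun do rewrite invE.
- move=> [chin [psi [hG [hc hpsi]]]].
  by exists psi; have [] := part2 chin psi hG hc hpsi.
Qed.
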